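(* The category of $\mathcal{D}$-coalgebras of the comonad $(\mathcal{D},\delta,\varepsilon)$ on $\mathsf{CLAC}$ is equivalent to the category of Cartesian differential categories and strict Cartesian differential functors between them. Explicitly: a Cartesian differential category $\mathbb{X}$ with combinator $\mathsf{D}$ corresponds to the coalgebra $(\mathbb{X},\omega^{\mathsf{D}})$ with $\omega^{\mathsf{D}}(f)_0=f$ and $\omega^{\mathsf{D}}(f)_n=\mathsf{D}^n[f]$, and a coalgebra $(\mathbb{X},\omega)$ corresponds to the Cartesian differential category with combinator $\mathsf{D}^\omega[f]=\omega(f)_1$; these assignments are mutually inverse, and coalgebra morphisms are exactly strict Cartesian differential functors.
   Context: Composition is written in diagrammatic order: $fg$ means first $f$ then $g$. A left additive category is a category whose hom-sets are commutative monoids (with $+$, $0$) such that $f(g+h)=fg+fh$ and $f0=0$; a map $h$ is additive if $(f+g)h=fh+gh$ and $0h=0$. A Cartesian left additive category is a left additive category with finite products in which all projections are additive. $\mathsf{CLAC}$ is the category of Cartesian left additive categories and functors preserving finite products strictly ($\mathsf{F}(A\times B)=\mathsf{F}A\times\mathsf{F}B$, terminal object preserved, $\mathsf{F}(\pi_j)=\pi_j$) and preserving $+$ and $0$ (strict Cartesian left additive functors). A Cartesian differential category is a Cartesian left additive category with a combinator $\mathsf{D}$ sending $f:A\to B$ to $\mathsf{D}[f]:A\times A\to B$ such that: [CD.1] $\mathsf{D}[f+g]=\mathsf{D}[f]+\mathsf{D}[g]$, $\mathsf{D}[0]=0$; [CD.2] $(1\times(\pi_0+\pi_1))\mathsf{D}[f]=(1\times\pi_0)\mathsf{D}[f]+(1\times\pi_1)\mathsf{D}[f]$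 (with $1\times(\pi_0+\pi_1),1\times\pi_j:A\times(A\times A)\to A\times A$) and $\langle 1,0\rangle\mathsf{D}[f]=0$; [CD.3] $\mathsf{D}[1]=\pi_1$, $\mathsf{D}[\pi_j]=\pi_1\pi_j$; [CD.4] $\mathsf{D}[\langle f,g\rangle]=\langle\mathsf{D}[f],\mathsf{D}[g]\rangle$; [CD.5] $\mathsf{D}[fg]=\langle\pi_0f,\mathsf{D}[f]\rangle\mathsf{D}[g]$; [CD.6] $\ell\,\mathsf{D}[\mathsf{D}[f]]=\mathsf{D}[f]$ where $\ell=\langle1,0\rangle\times\langle0,1\rangle:A\times A\to(A\times A)\times(A\times A)$; [CD.7] $c\,\mathsf{D}[\mathsf{D}[f]]=\mathsf{D}[\mathsf{D}[f]]$ where $c=\langle\langle\pi_0\pi_0,\pi_1\pi_0\rangle,\langle\pi_0\pi_1,\pi_1\pi_1\rangle\rangle$ on $(A\times A)\times(A\times A)$ swaps the two middle components. A strict Cartesian differential functor is a strict Cartesian left additive functor with $\mathsf{F}(\mathsf{D}[f])=\mathsf{D}[\mathsf{F}(f)]$. Pre-$\mathsf{D}$-sequences: in a category $\mathbb{X}$ with finite products put $\mathsf{P}(A)=A\times A$, $\mathsf{P}(f)=f\times f$. A pre-$\mathsf{D}$-sequence $f_\bullet:A\to B$ is a sequence $(f_0,f_1,\dots)$ with $f_n:\mathsf{P}^n(A)\to B$. For $h:A'\to A$, $k:B\to C$: $(h\cdot f_\bullet)_n=\mathsf{P}^n(h)f_n$, $(f_\bullet\cdot k)_n=f_nk$. Tangent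 $\mathsf{T}(f_\bullet):\mathsf{P}(A)\to\mathsf{P}(B)$, $\mathsf{T}(f_\bullet)_n=\langle\mathsf{P}^n(\pi_0)f_n,f_{n+1}\rangle$; differential $\mathsf{D}[f_\bullet]:\mathsf{P}(A)\to B$, $\mathsf{D}[f_\bullet]_n=f_{n+1}$. Identity $i_\bullet$: $i_0=1$, $i_n=\pi_1\cdots\pi_1$ ($n$ times). Composition $(f_\bullet\ast g_\bullet)_n=\mathsf{T}^n(f_\bullet)_0\,g_n$. Products: projections $i_\bullet\cdot\pi_j$, pairing $\langle f_\bullet,g_\bullet\rangle_n=\langle f_n,g_n\rangle$; additive structure pointwise ($0_n=0$, $(f_\bullet+g_\bullet)_n=f_n+g_n$). A $\mathsf{D}$-sequence (in a Cartesian left additive category) is a pre-$\mathsf{D}$-sequence with, for all $n$: [DS.1] $\langle1,0\rangle\cdot\mathsf{D}^{n+1}[f_\bullet]=0_\bullet$; [DS.2] $(1\times(\pi_0+\pi_1))\cdot\mathsf{D}^{n+1}[f_\bullet]=((1\times\pi_0)\cdot\mathsf{D}^{n+1}[f_\bullet])+((1\times\pi_1)\cdot\mathsf{D}^{n+1}[f_\bullet])$; [DS.3] $\ell\cdot\mathsf{D}^{n+2}[f_\bullet]=\mathsf{D}^{n+1}[f_\bullet]$; [DS.4] $c\cdot\mathsf{D}^{n+2}[f_\bullet]=\mathsf{D}^{n+2}[f_\bullet]$ (with $\langle1,0\rangle,1\times\pi_j,\ell,c$ the maps above for the object $\mathsf{P}^n(A)$). $\mathcal{D}[\mathbb{X}]$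 is the category of objects of $\mathbb{X}$ and $\mathsf{D}$-sequences, with identity $i_\bullet$, composition $\ast$, and the products and addition above. The comonad: $\mathcal{D}[\mathsf{F}](f_\bullet)_n=\mathsf{F}(f_n)$; $\varepsilon:\mathcal{D}[\mathbb{X}]\to\mathbb{X}$ is the identity on objects and $f_\bullet\mapsto f_0$; $\delta:\mathcal{D}[\mathbb{X}]\to\mathcal{D}[\mathcal{D}[\mathbb{X}]]$ is the identity on objects and sends $f_\bullet$ to the sequence with $0$-th term $f_\bullet$ and $n$-th term $\mathsf{D}^n[f_\bullet]$. A $\mathcal{D}$-coalgebra is $(\mathbb{X},\omega)$ with $\omega:\mathbb{X}\to\mathcal{D}[\mathbb{X}]$ a strict Cartesian left additive functor with $\omega\varepsilon=1$ and $\omega\delta=\omega\,\mathcal{D}[\omega]$; a morphism $(\mathbb{X},\omega)\to(\mathbb{Y},\omega')$ is a strict Cartesian left additive functor $\mathsf{F}$ with $\mathsf{F}\omega'=\omega\,\mathcal{D}[\mathsf{F}]$. *)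

(* Defs.v *)
(* Categories are formalized single-sorted: one type of objects, one type of
   morphisms with dom/cod; composition, pairing and addition are total
   operations whose axioms only constrain well-typed arguments.
   Composition is in diagrammatic order: [comp f g] = "first f then g". *)
From Stdlib Require Import Arith.

Record clac : Type := Clac {
  ob : Type;
  mor : Type;
  dom : mor -> ob;
  cod : mor -> ob;
  idm : ob -> mor;
  comp : mor -> mor -> mor;
  prod : ob -> ob -> ob;
  term : ob;
  pi0 : ob -> ob -> mor;
  pi1 : ob -> ob -> mor;
  pair : mor -> mor -> mor;
  bang : ob -> mor;
  add : mor -> mor -> mor;
  zero : ob -> ob -> mor;
  dom_idm : forall A, dom (idm A) = A;
  cod_idm : forall A, cod (idm A) = A;
  dom_comp : forall f g, cod f = dom g -> dom (comp f g) = dom f;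
  cod_comp : forall f g, cod f = dom g -> cod (comp f g) = cod g;
  comp_idl : forall f, comp (idm (dom f)) f = f;
  comp_idr : forall f, comp f (idm (cod f)) = f;
  comp_assoc : forall f g h, cod f = dom g -> cod g = dom h ->
    comp (comp f g) h = comp f (comp g h);
  dom_pi0 : forall A B, dom (pi0 A B) = prod A B;
  cod_pi0 : forall A B, cod (pi0 A B) = A;
  dom_pi1 : forall A B, dom (pi1 A B) = prod A B;
  cod_pi1 : forall A B, cod (pi1 A B) = B;
  dom_pair : forall f g, dom f = dom g -> dom (pair f g) = dom f;
  cod_pair : forall f g, dom f = dom g -> cod (pair f g) = prod (cod f) (cod g);
  pair_pi0 : forall f g, dom f = dom g -> comp (pair f g) (pi0 (cod f) (cod g)) = f;
  pair_pi1 : forall f g, dom f = dom g -> comp (pair f g) (pi1 (cod f) (cod g)) = g;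
  pair_eta : forall h A B, cod h = prod A B ->
    pair (comp h (pi0 A B)) (comp h (pi1 A B)) = h;
  dom_bang : forall A, dom (bang A) = A;
  cod_bang : forall A, cod (bang A) = term;
  bang_uniq : forall h, cod h = term -> h = bang (dom h);
  dom_zero : forall A B, dom (zero A B) = A;
  cod_zero : forall A B, cod (zero A B) = B;
  dom_add : forall f g, dom f = dom g -> cod f = cod g -> dom (add f g) = dom f;
  cod_add : forall f g, dom f = dom g -> cod f = cod g -> cod (add f g) = cod f;
  add_comm : forall f g, dom f = dom g -> cod f = cod g -> add f g = add g f;
  add_assoc : forall f g h, dom f = dom g -> cod f = cod g ->
    dom g = dom h -> cod g = cod h -> add (add f g) h = add f (add g h);
  add_zero : forall f, add f (zero (dom f) (cod f)) = f;
  comp_addr : forall f g h, cod f = dom g -> dom g = dom h -> cod g = cod h ->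
    comp f (add g h) = add (comp f g) (comp f h);
  comp_zeror : forall f C, comp f (zero (cod f) C) = zero (dom f) C;
  pi0_add : forall f g A B, dom f = dom g -> cod f = prod A B -> cod g = prod A B ->
    comp (add f g) (pi0 A B) = add (comp f (pi0 A B)) (comp g (pi0 A B));
  pi0_zero : forall C A B, comp (zero C (prod A B)) (pi0 A B) = zero C A;
  pi1_add : forall f g A B, dom f = dom g -> cod f = prod A B -> cod g = prod A B ->
    comp (add f g) (pi1 A B) = add (comp f (pi1 A B)) (comp g (pi1 A B));
  pi1_zero : forall C A B, comp (zero C (prod A B)) (pi1 A B) = zero C B
}.

Arguments dom {c} _. Arguments cod {c} _. Arguments idm {c} _.
Arguments comp {c} _ _. Arguments prod {c} _ _. Arguments pi0 {c} _ _.
Arguments pi1 {c} _ _. Arguments pair {c} _ _. Arguments bang {c} _.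
Arguments add {c} _ _. Arguments zero {c} _ _.

Section Seqs.
Variable X : clac.

Definition P (A : ob X) : ob X := prod A A.
Definition prodm (f g : mor X) : mor X :=
  pair (comp (pi0 (dom f) (dom g)) f) (comp (pi1 (dom f) (dom g)) g).
Definition Pm (f : mor X) : mor X := prodm f f.
Definition Pn (n : nat) (A : ob X) : ob X := Nat.iter n P A.
Definition Pnm (n : nat) (f : mor X) : mor X := Nat.iter n Pm f.

Definition unit0 (A : ob X) : mor X := pair (idm A) (zero A A).
Definition unit1 (A : ob X) : mor X := pair (zero A A) (idm A).
Definition sum_map (A : ob X) : mor X := prodm (idm A) (add (pi0 A A) (pi1 A A)).
Definition proj0_map (A : ob X) : mor X := prodm (idm A) (pi0 A A).
Definition proj1_map (A : ob X) : mor X := prodm (idm A) (pi1 A A).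
Definition ell (A : ob X) : mor X := prodm (unit0 A) (unit1 A).
Definition cmap (A : ob X) : mor X :=
  pair (pair (comp (pi0 (P A) (P A)) (pi0 A A)) (comp (pi1 (P A) (P A)) (pi0 A A)))
       (pair (comp (pi0 (P A) (P A)) (pi1 A A)) (comp (pi1 (P A) (P A)) (pi1 A A))).

Definition pseq : Type := nat -> mor X.
Definition seqeq (f g : pseq) : Prop := forall n, f n = g n.
Definition is_preDseq (A B : ob X) (f : pseq) : Prop :=
  forall n, dom (f n) = Pn n A /\ cod (f n) = B.
Definition lact (h : mor X) (f : pseq) : pseq := fun n => comp (Pnm n h) (f n).
Definition ract (f : pseq) (k : mor X) : pseq := fun n => comp (f n) k.
Definition Tseq (f : pseq) : pseq :=
  fun n => pair (comp (Pnm n (pi0 (dom (f 0)) (dom (f 0)))) (f n)) (f (S n)).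
Definition Dseq (f : pseq) : pseq := fun n => f (S n).
Definition Dnseq (k : nat) (f : pseq) : pseq := Nat.iter k Dseq f.
Fixpoint iseq (A : ob X) (n : nat) : mor X :=
  match n with
  | 0 => idm A
  | S k => comp (pi1 (Pn k A) (Pn k A)) (iseq A k)
  end.
Definition seqcomp (f g : pseq) : pseq := fun n => comp (Nat.iter n Tseq f 0) (g n).
Definition seqadd (f g : pseq) : pseq := fun n => add (f n) (g n).
Definition seqzero (A B : ob X) : pseq := fun n => zero (Pn n A) B.

Definition is_Dseq (A B : ob X) (f : pseq) : Prop :=
  is_preDseq A B f /\
  forall n,
    seqeq (lact (unit0 (Pn n A)) (Dnseq (S n) f)) (seqzero (Pn n A) B) /\
    seqeq (lact (sum_map (Pn n A)) (Dnseq (S n) f))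
          (seqadd (lact (proj0_map (Pn n A)) (Dnseq (S n) f))
                  (lact (proj1_map (Pn n A)) (Dnseq (S n) f))) /\
    seqeq (lact (ell (Pn n A)) (Dnseq (S (S n)) f)) (Dnseq (S n) f) /\
    seqeq (lact (cmap (Pn n A)) (Dnseq (S (S n)) f)) (Dnseq (S (S n)) f).

Record is_cdc (D : mor X -> mor X) : Prop := {
  cd_dom : forall f, dom (D f) = P (dom f);
  cd_cod : forall f, cod (D f) = cod f;
  cd1_add : forall f g, dom f = dom g -> cod f = cod g -> D (add f g) = add (D f) (D g);
  cd1_zero : forall A B, D (zero A B) = zero (P A) B;
  cd2_add : forall f, comp (sum_map (dom f)) (D f)
                      = add (comp (proj0_map (dom f)) (D f)) (comp (proj1_map (dom f)) (D f));
  cd2_zero : forall f, comp (unit0 (dom f)) (D f) = zero (dom f) (cod f);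
  cd3_id : forall A, D (idm A) = pi1 A A;
  cd3_pi0 : forall A B, D (pi0 A B) = comp (pi1 (prod A B) (prod A B)) (pi0 A B);
  cd3_pi1 : forall A B, D (pi1 A B) = comp (pi1 (prod A B) (prod A B)) (pi1 A B);
  cd4 : forall f g, dom f = dom g -> D (pair f g) = pair (D f) (D g);
  cd5 : forall f g, cod f = dom g ->
    D (comp f g) = comp (pair (comp (pi0 (dom f) (dom f)) f) (D f)) (D g);
  cd6 : forall f, comp (ell (dom f)) (D (D f)) = D f;
  cd7 : forall f, comp (cmap (dom f)) (D (D f)) = D (D f)
}.

Definition omegaD (D : mor X -> mor X) : mor X -> pseq := fun f n => Nat.iter n D f.
Definition Dom (wm : mor X -> pseq) : mor X -> mor X := fun f => wm f 1.

(* D-coalgebra structures (wo, wm) : X -> D[X], unfolded *)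
Record is_coalg (wo : ob X -> ob X) (wm : mor X -> pseq) : Prop := {
  w_Dseq : forall f, is_Dseq (wo (dom f)) (wo (cod f)) (wm f);
  w_id : forall A, seqeq (wm (idm A)) (iseq (wo A));
  w_comp : forall f g, cod f = dom g -> seqeq (wm (comp f g)) (seqcomp (wm f) (wm g));
  w_prod : forall A B, wo (prod A B) = prod (wo A) (wo B);
  w_term : wo (term X) = term X;
  w_pi0 : forall A B, seqeq (wm (pi0 A B)) (ract (iseq (prod (wo A) (wo B))) (pi0 (wo A) (wo B)));
  w_pi1 : forall A B, seqeq (wm (pi1 A B)) (ract (iseq (prod (wo A) (wo B))) (pi1 (wo A) (wo B)));
  w_add : forall f g, dom f = dom g -> cod f = cod g ->
    seqeq (wm (add f g)) (seqadd (wm f) (wm g));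
  w_zero : forall A B, seqeq (wm (zero A B)) (seqzero (wo A) (wo B));
  w_counit_ob : forall A, wo A = A;
  w_counit : forall f, wm f 0 = f;
  (* coassociativity  omega ; delta = omega ; D[omega] *)
  w_coassoc_ob : forall A, wo A = wo (wo A);
  w_coassoc : forall f n, seqeq (Dnseq n (wm f)) (wm (wm f n))
}.

End Seqs.

Arguments P {X} _. Arguments prodm {X} _ _. Arguments Pn {X} _ _.
Arguments Pnm {X} _ _.

Record is_sclac_functor (X Y : clac) (Fo : ob X -> ob Y) (Fm : mor X -> mor Y) : Prop := {
  F_dom : forall f, dom (Fm f) = Fo (dom f);
  F_cod : forall f, cod (Fm f) = Fo (cod f);
  F_id : forall A, Fm (idm A) = idm (Fo A);
  F_comp : forall f g, cod f = dom g -> Fm (comp f g) = comp (Fm f) (Fm g);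
  F_prod : forall A B, Fo (prod A B) = prod (Fo A) (Fo B);
  F_term : Fo (term X) = term Y;
  F_pi0 : forall A B, Fm (pi0 A B) = pi0 (Fo A) (Fo B);
  F_pi1 : forall A B, Fm (pi1 A B) = pi1 (Fo A) (Fo B);
  F_add : forall f g, dom f = dom g -> cod f = cod g -> Fm (add f g) = add (Fm f) (Fm g);
  F_zero : forall A B, Fm (zero A B) = zero (Fo A) (Fo B)
}.

Definition is_scdf (X Y : clac) (D : mor X -> mor X) (D' : mor Y -> mor Y)
    (Fo : ob X -> ob Y) (Fm : mor X -> mor Y) : Prop :=
  is_sclac_functor X Y Fo Fm /\ forall f, Fm (D f) = D' (Fm f).

Definition is_coalg_mor (X Y : clac)
    (wo : ob X -> ob X) (wm : mor X -> pseq X)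
    (wo' : ob Y -> ob Y) (wm' : mor Y -> pseq Y)
    (Fo : ob X -> ob Y) (Fm : mor X -> mor Y) : Prop :=
  is_sclac_functor X Y Fo Fm /\
  (forall A, wo' (Fo A) = Fo (wo A)) /\
  (forall f n, wm' (Fm f) n = Fm (wm f n)).

(* Main.v *)
Require Import Defs.
From Stdlib Require Import Arith Lia.

Section Gen.
Variable X : clac.

Lemma dom_prodm (f g : mor X) : dom (prodm f g) = prod (dom f) (dom g).
Proof. unfold prodm. rewrite dom_pair; rewrite !dom_comp; rewrite ?dom_pi0, ?dom_pi1, ?cod_pi0, ?cod_pi1; auto. Qed.
Lemma cod_prodm (f g : mor X) : cod (prodm f g) = prod (cod f) (cod g).
Proof. unfold prodm. rewrite cod_pair; rewrite ?dom_comp, ?cod_comp; rewrite ?dom_pi0, ?dom_pi1, ?cod_pi0, ?cod_pi1; auto. Qed.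
Lemma dom_Pnm n (f : mor X) : dom (Pnm n f) = Pn n (dom f).
Proof. induction n; simpl; auto. unfold Pm. rewrite dom_prodm, IHn. reflexivity. Qed.
Lemma cod_Pnm n (f : mor X) : cod (Pnm n f) = Pn n (cod f).
Proof. induction n; simpl; auto. unfold Pm. rewrite cod_prodm, IHn. reflexivity. Qed.
Lemma dom_Pm (f : mor X) : dom (Pm X f) = P (dom f).
Proof. apply dom_prodm. Qed.
Lemma cod_Pm (f : mor X) : cod (Pm X f) = P (cod f).
Proof. apply cod_prodm. Qed.
End Gen.

Ltac tystep := first [
  progress rewrite ?dom_idm, ?cod_idm, ?dom_pi0, ?cod_pi0, ?dom_pi1, ?cod_pi1,
    ?dom_zero, ?cod_zero, ?dom_prodm, ?cod_prodm, ?dom_Pnm, ?cod_Pnm, ?dom_Pm, ?cod_Pm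
  | rewrite dom_comp by tyclose
  | rewrite cod_comp by tyclose
  | rewrite dom_pair by tyclose
  | rewrite cod_pair by tyclose
  | rewrite dom_add by tyclose
  | rewrite cod_add by tyclose ]
with tyclose := solve [ repeat tystep; first [ reflexivity | assumption | congruence | unfold P in *; congruence ] ].

Section Gen2.
Variable X : clac.
Lemma comp_pair (h f g : mor X) : cod h = dom f -> dom f = dom g ->
  comp h (pair f g) = pair (comp h f) (comp h g).
Proof.
  intros H1 H2.
  rewrite <- (pair_eta _ (comp h (pair f g)) (cod f) (cod g)) by tyclose.
  rewrite !comp_assoc by tyclose. rewrite pair_pi0, pair_pi1 by tyclose. reflexivity.
Qed.
End Gen2.
Section Gen3.
Variable X : clac.
Lemma prodm_pi0 (f g : mor X) : comp (prodm f g) (pi0 (cod f) (cod g)) = comp (pi0 (dom f) (dom g)) f.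
Proof. unfold prodm. 
  transitivity (comp (pair (comp (pi0 (dom f) (dom g)) f) (comp (pi1 (dom f) (dom g)) g))
    (pi0 (cod (comp (pi0 (dom f) (dom g)) f)) (cod (comp (pi1 (dom f) (dom g)) g)))).
  rewrite !cod_comp by tyclose. reflexivity. apply pair_pi0. tyclose. Qed.
Lemma prodm_pi1 (f g : mor X) : comp (prodm f g) (pi1 (cod f) (cod g)) = comp (pi1 (dom f) (dom g)) g.
Proof. unfold prodm. 
  transitivity (comp (pair (comp (pi0 (dom f) (dom g)) f) (comp (pi1 (dom f) (dom g)) g))
    (pi1 (cod (comp (pi0 (dom f) (dom g)) f)) (cod (comp (pi1 (dom f) (dom g)) g)))).
  rewrite !cod_comp by tyclose. reflexivity. apply pair_pi1. tyclose. Qed.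
End Gen3.

Section CDC.
Variable X : clac.
Variable D : mor X -> mor X.
Hypothesis HD : is_cdc X D.

Definition lin (h : mor X) := D h = comp (pi1 (dom h) (dom h)) h.

Lemma lin_chain h k : lin h -> cod h = dom k -> D (comp h k) = comp (Pm X h) (D k).
Proof. intros L E. rewrite (cd5 _ _ HD) by auto. rewrite L. reflexivity. Qed.

Lemma lin_comp h k : lin h -> lin k -> cod h = dom k -> lin (comp h k).
Proof.
  intros L K E. unfold lin. rewrite lin_chain by auto. rewrite K.
  rewrite <- comp_assoc by tyclose.
  unfold Pm. rewrite <- E. rewrite prodm_pi1.
  rewrite dom_comp by auto. rewrite comp_assoc by tyclose. reflexivity.
Qed.
Lemma lin_pi0 A B : lin (pi0 A B).
Proof. unfold lin. rewrite (cd3_pi0 _ _ HD), dom_pi0. reflexivity. Qed.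
Lemma lin_pi1 A B : lin (pi1 A B).
Proof. unfold lin. rewrite (cd3_pi1 _ _ HD), dom_pi1. reflexivity. Qed.
Lemma lin_idm A : lin (idm A).
Proof. unfold lin. rewrite (cd3_id _ _ HD), dom_idm.
  rewrite <- (cod_pi1 X A A) at 5. rewrite comp_idr. reflexivity. Qed.
Lemma lin_zero A B : lin (zero A B).
Proof. unfold lin. rewrite (cd1_zero _ _ HD), dom_zero.
  rewrite <- (cod_pi1 X A A) at 4. rewrite comp_zeror, dom_pi1. reflexivity. Qed.
Lemma lin_pair f g : lin f -> lin g -> dom f = dom g -> lin (pair f g).
Proof. intros F G E. unfold lin. rewrite (cd4 _ _ HD) by auto. rewrite F, G.
  rewrite dom_pair by auto. rewrite comp_pair by tyclose. rewrite E. reflexivity. Qed.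
Lemma lin_add f g : lin f -> lin g -> dom f = dom g -> cod f = cod g -> lin (add f g).
Proof. intros F G E1 E2. unfold lin. rewrite (cd1_add _ _ HD) by auto. rewrite F, G.
  rewrite dom_add by auto. rewrite comp_addr by tyclose. rewrite E1. reflexivity. Qed.
Lemma lin_prodm f g : lin f -> lin g -> lin (prodm f g).
Proof. intros F G. unfold prodm. apply lin_pair; try apply lin_comp; auto using lin_pi0, lin_pi1;
  tyclose. Qed.
Lemma lin_Pnm n h : lin h -> lin (Pnm n h).
Proof. intro L. induction n; simpl; auto. apply lin_prodm; auto. Qed.
Lemma lin_unit0 A : lin (unit0 X A).
Proof. unfold unit0. apply lin_pair; auto using lin_idm, lin_zero. tyclose. Qed.
Lemma lin_unit1 A : lin (unit1 X A).
Proof. unfold unit1. apply lin_pair; auto using lin_idm, lin_zero. tyclose. Qed.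
Lemma lin_sum_map A : lin (sum_map X A).
Proof. unfold sum_map. apply lin_prodm; auto using lin_idm. apply lin_add; auto using lin_pi0, lin_pi1; tyclose. Qed.
Lemma lin_proj0_map A : lin (proj0_map X A).
Proof. unfold proj0_map. apply lin_prodm; auto using lin_idm, lin_pi0. Qed.
Lemma lin_proj1_map A : lin (proj1_map X A).
Proof. unfold proj1_map. apply lin_prodm; auto using lin_idm, lin_pi1. Qed.
Lemma lin_ell A : lin (ell X A).
Proof. unfold ell. apply lin_prodm; auto using lin_unit0, lin_unit1. Qed.
Lemma lin_cmap A : lin (cmap X A).
Proof. unfold cmap.
  repeat (apply lin_pair || apply lin_comp); auto using lin_pi0, lin_pi1; tyclose. Qed.

Lemma dom_iseq A n : dom (iseq X A n) = Pn n A.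
Proof. induction n; simpl. apply dom_idm. rewrite dom_comp, dom_pi1. reflexivity.
  rewrite cod_pi1. auto. Qed.
Lemma cod_iseq A n : cod (iseq X A n) = A.
Proof. induction n; simpl. apply cod_idm. rewrite cod_comp; auto. 
  rewrite cod_pi1, dom_iseq. reflexivity. Qed.
Lemma lin_iseq A n : lin (iseq X A n).
Proof. induction n; simpl. apply lin_idm. apply lin_comp; auto using lin_pi1.
  rewrite cod_pi1, dom_iseq. reflexivity. Qed.

Lemma dom_iterD n f : dom (Nat.iter n D f) = Pn n (dom f).
Proof. induction n; simpl; auto. rewrite (cd_dom _ _ HD), IHn. reflexivity. Qed.
Lemma cod_iterD n f : cod (Nat.iter n D f) = cod f.
Proof. induction n; simpl; auto. rewrite (cd_cod _ _ HD), IHn. reflexivity. Qed.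

Lemma iterD_lin n h k : lin h -> cod h = dom k ->
  Nat.iter n D (comp h k) = comp (Pnm n h) (Nat.iter n D k).
Proof. intros L E. induction n; simpl; auto. rewrite IHn.
  rewrite lin_chain; auto using lin_Pnm. rewrite cod_Pnm, dom_iterD, E. reflexivity. Qed.

Lemma iterD_zero n A B : Nat.iter n D (zero A B) = zero (Pn n A) B.
Proof. induction n; simpl; auto. rewrite IHn, (cd1_zero _ _ HD). reflexivity. Qed.
Lemma iterD_add n f g : dom f = dom g -> cod f = cod g ->
  Nat.iter n D (add f g) = add (Nat.iter n D f) (Nat.iter n D g).
Proof. intros E1 E2. induction n; simpl; auto. rewrite IHn, (cd1_add _ _ HD); auto.
  rewrite !dom_iterD; congruence. rewrite !cod_iterD; congruence. Qed.
Lemma iterD_pair n f g : dom f = dom g ->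
  Nat.iter n D (pair f g) = pair (Nat.iter n D f) (Nat.iter n D g).
Proof. intros E1. induction n; simpl; auto. rewrite IHn, (cd4 _ _ HD); auto.
  rewrite !dom_iterD; congruence. Qed.
Lemma iterD_linear n h : lin h -> Nat.iter n D h = comp (iseq X (dom h) n) h.
Proof. intro L. induction n; simpl. rewrite comp_idl; auto.
  rewrite IHn. assert (L2 : lin (comp (iseq X (dom h) n) h)).
  apply lin_comp; auto using lin_iseq. rewrite cod_iseq; auto.
  rewrite L2. rewrite dom_comp, dom_iseq. rewrite comp_assoc; auto.
  rewrite cod_pi1, dom_iseq; auto. rewrite cod_iseq; auto. rewrite cod_iseq; auto. Qed.
Definition Tm (f : mor X) := pair (comp (pi0 (dom f) (dom f)) f) (D f).

Lemma dom_Tm f : dom (Tm f) = P (dom f).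
Proof. unfold Tm. rewrite dom_pair. tyclose. rewrite (cd_dom _ _ HD). tyclose. Qed.
Lemma cod_Tm f : cod (Tm f) = P (cod f).
Proof. unfold Tm. rewrite cod_pair. rewrite (cd_cod _ _ HD). tyclose.
  rewrite (cd_dom _ _ HD). tyclose. Qed.

Lemma iterD_comp n : forall f g, cod f = dom g ->
  Nat.iter n D (comp f g) = comp (Nat.iter n Tm f) (Nat.iter n D g).
Proof. induction n; intros f g E; [reflexivity|].
  rewrite !Nat.iter_succ_r.
  rewrite (cd5 _ _ HD) by auto. fold (Tm f).
  rewrite IHn. reflexivity. rewrite cod_Tm, (cd_dom _ _ HD), E. reflexivity. Qed.

Lemma Tseq_omega f m : Tseq X (omegaD X D f) m = Nat.iter m D (Tm f).
Proof. unfold Tseq, omegaD, Tm. simpl.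
  rewrite iterD_pair. rewrite iterD_lin; auto using lin_pi0. rewrite <- (Nat.iter_succ_r m _ D f). reflexivity.
  rewrite cod_pi0. reflexivity. rewrite (cd_dom _ _ HD). tyclose. Qed.

Lemma Tseq_ext (s t : pseq X) : (forall m, s m = t m) -> forall m, Tseq X s m = Tseq X t m.
Proof. intros H m. unfold Tseq. rewrite !H. reflexivity. Qed.

Lemma iterTseq n f : forall m, Nat.iter n (Tseq X) (omegaD X D f) m = omegaD X D (Nat.iter n Tm f) m.
Proof. induction n; intro m; simpl; auto.
  rewrite (Tseq_ext _ _ IHn). rewrite Tseq_omega. reflexivity. Qed.

Lemma Dnseq_eq k (s : pseq X) m : Dnseq X k s m = s (k + m).
Proof. revert m; induction k; intro m; simpl; auto. unfold Dseq. rewrite IHk.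
  f_equal. lia. Qed.
Lemma Dn_omega k f m : Dnseq X k (omegaD X D f) m = Nat.iter m D (Nat.iter k D f).
Proof. rewrite Dnseq_eq. unfold omegaD. rewrite Nat.add_comm, Nat.iter_add. reflexivity. Qed.

Lemma cdc_Dseq f : is_Dseq X (dom f) (cod f) (omegaD X D f).
Proof.
  split. intro n; unfold omegaD; split; [apply dom_iterD | apply cod_iterD].
  intro n. rewrite <- (dom_iterD n f). rewrite <- (cod_iterD n f).
  set (g := Nat.iter n D f).
  assert (Hk : forall k m, Dnseq X (k + n) (omegaD X D f) m = Nat.iter m D (Nat.iter k D g)).
  { intros k m. rewrite Dn_omega. unfold g. rewrite Nat.iter_add. reflexivity. }
  change (S n) with (1 + n). change (S (1 + n)) with (2 + n).
  split; [|split; [|split]]; intro m; unfold lact, seqzero, seqadd; rewrite ?Hk; simpl.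
  - rewrite <- iterD_lin. rewrite (cd2_zero _ _ HD). apply iterD_zero.
    apply lin_unit0. unfold unit0. rewrite (cd_dom _ _ HD). tyclose.
  - rewrite <- !iterD_lin. rewrite (cd2_add _ _ HD). rewrite iterD_add. reflexivity.
    all: try apply lin_sum_map; try apply lin_proj0_map; try apply lin_proj1_map.
    all: unfold sum_map, proj0_map, proj1_map; rewrite ?(cd_dom _ _ HD); try tyclose.
    all: assert (dg : dom (D g) = P (dom g)) by apply (cd_dom _ _ HD); assert (cg : cod (D g) = cod g) by apply (cd_cod _ _ HD); tyclose.
  - rewrite <- iterD_lin. rewrite (cd6 _ _ HD). reflexivity.
    apply lin_ell. unfold ell. rewrite !(cd_dom _ _ HD). unfold unit0, unit1. tyclose.
  - rewrite <- iterD_lin. rewrite (cd7 _ _ HD). reflexivity.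
    apply lin_cmap. unfold cmap. rewrite !(cd_dom _ _ HD). tyclose.
Qed.
Lemma cdc_coalg : is_coalg X (fun A => A) (omegaD X D).
Proof.
  split.
  - apply cdc_Dseq.
  - intros A n. unfold omegaD. induction n; simpl; auto.
    rewrite IHn. rewrite (lin_iseq A n), dom_iseq. reflexivity.
  - intros f g E n. unfold seqcomp. rewrite iterTseq. unfold omegaD. simpl.
    apply iterD_comp; auto.
  - reflexivity.
  - reflexivity.
  - intros A B n. unfold ract, omegaD. rewrite iterD_linear by apply lin_pi0.
    rewrite dom_pi0. reflexivity.
  - intros A B n. unfold ract, omegaD. rewrite iterD_linear by apply lin_pi1.
    rewrite dom_pi1. reflexivity.
  - intros f g E1 E2 n. unfold seqadd, omegaD. apply iterD_add; auto.
  - intros A B n. unfold seqzero, omegaD. apply iterD_zero.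
  - reflexivity.
  - reflexivity.
  - reflexivity.
  - intros f n m. rewrite Dn_omega. reflexivity.
Qed.
End CDC.

Section Coalg.
Variable X : clac.
Variables (wo : ob X -> ob X) (wm : mor X -> pseq X).
Hypothesis HW : is_coalg X wo wm.

Lemma wdom f n : dom (wm f n) = Pn n (dom f).
Proof. destruct (w_Dseq _ _ _ HW f) as [H _]. destruct (H n) as [H1 _].
  rewrite H1, (w_counit_ob _ _ _ HW). reflexivity. Qed.
Lemma wcod f n : cod (wm f n) = cod f.
Proof. destruct (w_Dseq _ _ _ HW f) as [H _]. destruct (H n) as [_ H1].
  rewrite H1, (w_counit_ob _ _ _ HW). reflexivity. Qed.

Lemma iterDom n f : Nat.iter n (Dom X wm) f = wm f n.
Proof. induction n; simpl. symmetry; apply (w_counit _ _ _ HW).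
  rewrite IHn. unfold Dom. rewrite <- (w_coassoc _ _ _ HW f n 1).
  rewrite Dnseq_eq. f_equal. lia. Qed.

Lemma pi1_idr (A B : ob X) : comp (pi1 A B) (idm B) = pi1 A B.
Proof. rewrite <- (cod_pi1 X A B) at 2. apply comp_idr. Qed.

Lemma wm_pi k (A B : ob X) (j : bool) : cod k = prod A B ->
  wm (comp k (if j then pi0 A B else pi1 A B)) 1 = comp (wm k 1) (if j then pi0 A B else pi1 A B).
Proof. intro E. rewrite (w_comp _ _ _ HW) by (destruct j; tyclose).
  unfold seqcomp. simpl. destruct j; [rewrite (w_pi0 _ _ _ HW) | rewrite (w_pi1 _ _ _ HW)];
  unfold ract, Tseq; simpl; rewrite !(w_counit_ob _ _ _ HW), (w_counit _ _ _ HW), pi1_idr;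
  rewrite <- comp_assoc;
  assert (W1 := wdom k 1); assert (W2 := wcod k 1); simpl in W1; try tyclose;
  (replace (pi1 (prod A B) (prod A B)) with (pi1 (cod (comp (pi0 (dom k) (dom k)) k)) (cod (wm k 1)));
   [rewrite pair_pi1; [reflexivity | tyclose] | rewrite W2, cod_comp, E; [reflexivity|tyclose]]).
Qed.

Lemma coalg_cdc : is_cdc X (Dom X wm).
Proof.
  assert (DS : forall f, let A := dom f in
   (comp (unit0 X A) (wm f 1) = zero A (cod f)) /\
   (comp (sum_map X A) (wm f 1) = add (comp (proj0_map X A) (wm f 1)) (comp (proj1_map X A) (wm f 1))) /\
   (comp (ell X A) (wm f 2) = wm f 1) /\ (comp (cmap X A) (wm f 2) = wm f 2)).
  { intro f. destruct (w_Dseq _ _ _ HW f) as [_ H]. destruct (H 0) as [H1 [H2 [H3 H4]]].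
    specialize (H1 0). specialize (H2 0). specialize (H3 0). specialize (H4 0).
    unfold lact, seqadd, seqzero, Dnseq, Dseq in *. simpl in *.
    rewrite !(w_counit_ob _ _ _ HW) in *. auto. }
  unfold Dom. split.
  - intro f. apply wdom.
  - intro f. apply wcod.
  - intros f g E1 E2. apply (w_add _ _ _ HW); auto.
  - intros A B. rewrite (w_zero _ _ _ HW). unfold seqzero. rewrite !(w_counit_ob _ _ _ HW). reflexivity.
  - intro f. apply DS.
  - intro f. apply DS.
  - intro A. rewrite (w_id _ _ _ HW). simpl. rewrite !(w_counit_ob _ _ _ HW). apply pi1_idr.
  - intros A B. rewrite (w_pi0 _ _ _ HW). unfold ract. simpl. rewrite !(w_counit_ob _ _ _ HW), pi1_idr. reflexivity.
  - intros A B. rewrite (w_pi1 _ _ _ HW). unfold ract. simpl. rewrite !(w_counit_ob _ _ _ HW), pi1_idr. reflexivity.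
  - intros f g E. 
    rewrite <- (pair_eta _ (wm (pair f g) 1) (cod f) (cod g)).
    rewrite <- (wm_pi _ _ _ true), <- (wm_pi _ _ _ false). simpl.
    rewrite pair_pi0, pair_pi1 by auto. reflexivity.
    all: rewrite ?wcod; apply cod_pair; auto.
  - intros f g E. rewrite (w_comp _ _ _ HW) by auto. unfold seqcomp. simpl. unfold Tseq. simpl.
    rewrite (w_counit _ _ _ HW). reflexivity.
  - intro f. rewrite <- (w_coassoc _ _ _ HW f 1 1). simpl. unfold Dseq. apply DS.
  - intro f. rewrite <- (w_coassoc _ _ _ HW f 1 1). simpl. unfold Dseq. apply DS.
Qed.
End Coalg.

Theorem theorem4p21 :
  (* a CDC (X, D) gives the coalgebra (X, omega^D) *)
  (forall (X : clac) (D : mor X -> mor X),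
      is_cdc X D -> is_coalg X (fun A => A) (omegaD X D)) /\
  (* a coalgebra (X, omega) gives the CDC (X, D^omega) *)
  (forall (X : clac) (wo : ob X -> ob X) (wm : mor X -> pseq X),
      is_coalg X wo wm -> is_cdc X (Dom X wm)) /\
  (* D^(omega^D) = D *)
  (forall (X : clac) (D : mor X -> mor X),
      is_cdc X D -> forall f, Dom X (omegaD X D) f = D f) /\
  (* omega^(D^omega) = omega *)
  (forall (X : clac) (wo : ob X -> ob X) (wm : mor X -> pseq X),
      is_coalg X wo wm ->
      (forall A, wo A = A) /\ (forall f n, omegaD X (Dom X wm) f n = wm f n)) /\
  (* morphisms: for CDCs, coalgebra morphisms = strict Cartesian differential functors *)
  (forall (X Y : clac) (D : mor X -> mor X) (D' : mor Y -> mor Y)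
          (Fo : ob X -> ob Y) (Fm : mor X -> mor Y),
      is_cdc X D -> is_cdc Y D' ->
      (is_coalg_mor X Y (fun A => A) (omegaD X D) (fun B => B) (omegaD Y D') Fo Fm
       <-> is_scdf X Y D D' Fo Fm)) /\
  (* morphisms: for coalgebras, coalgebra morphisms = strict Cartesian differential functors *)
  (forall (X Y : clac) (wo : ob X -> ob X) (wm : mor X -> pseq X)
          (wo' : ob Y -> ob Y) (wm' : mor Y -> pseq Y)
          (Fo : ob X -> ob Y) (Fm : mor X -> mor Y),
      is_coalg X wo wm -> is_coalg Y wo' wm' ->
      (is_coalg_mor X Y wo wm wo' wm' Fo Fm
       <-> is_scdf X Y (Dom X wm) (Dom Y wm') Fo Fm)).
Proof.
  split; [|split; [|split; [|split; [|split]]]].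
  - intros X D HD. apply cdc_coalg; auto.
  - intros X wo wm HW. apply (coalg_cdc X wo wm HW).
  - intros X D HD f. reflexivity.
  - intros X wo wm HW. split. apply (w_counit_ob _ _ _ HW).
    intros f n. unfold omegaD. apply (iterDom X wo wm HW).
  - intros X Y D D' Fo Fm HD HD'. split.
    + intros [S [_ H]]. split; auto. intro f. exact (eq_sym (H f 1)).
    + intros [S H]. split; auto. split; [reflexivity|].
      intros f n. unfold omegaD. induction n; simpl; auto. rewrite IHn, H. reflexivity.
  - intros X Y wo wm wo' wm' Fo Fm HW HW'. split.
    + intros [S [_ H]]. split; auto. intro f. unfold Dom. symmetry. apply H.
    + intros [S H]. split; auto. split.
      * intro A. rewrite (w_counit_ob _ _ _ HW), (w_counit_ob _ _ _ HW'). reflexivity.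
      * intros f n. rewrite <- (iterDom X wo wm HW), <- (iterDom Y wo' wm' HW').
        induction n; simpl; auto. rewrite IHn, H. reflexivity.
Qed.
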